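(* Let $\nu_0$ be a function on $\mathbb{Z}^d$ (initial mass configuration). If $T_1:[0,\tau_1]\to\mathbb{Z}^d$ and $T_2:[0,\tau_2]\to\mathbb{Z}^d$ are complete legal toppling functions for $\nu_0$, then $\mathcal{L}(T_1^{-1}(x))=\mathcal{L}(T_2^{-1}(x))$ for every $x\in\mathbb{Z}^d$. In particular $\tau_1=\tau_2$ and the final configurations $\nu_{\tau_1}$ (for $T_1$) and $\nu_{\tau_2}$ (for $T_2$) coincide.
   Context: $\mathcal{L}$ is Lebesgue measure on $\mathbb{R}$. The discrete Laplacian is $\Delta f(x)=\frac{1}{2d}\sum_{y\sim x}f(y)-f(x)$. A toppling function is a map $T:[0,\tau]\to\mathbb{Z}^d$ ($\tau>0$) with only finitely many discontinuities in $[0,t]$ for every $t<\tau$; $T(t)$ is the site toppled at time $t$. Its odometer at time $t$ is $u_t(x)=\mathcal{L}(T^{-1}(x)\cap[0,t])$ and the mass at time $t$ is $\nu_t=\nu_0+\Delta u_t$. $T$ is legal for $\nu_0$ if $\nu_t(T(t))\ge1$ for all $0\le t\le\tau$, and complete if moreover $\nu_\tau\le1$ everywhere. *)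

(* Defs.v *)
From Stdlib Require Import Reals Lra ZArith List ClassicalEpsilon.
Open Scope R_scope.

(* Points of Z^d are represented as functions nat -> Z whose coordinates
   of index >= d vanish. *)
Definition site := nat -> Z.
Definition in_Zd (d : nat) (x : site) : Prop := forall j, (d <= j)%nat -> x j = 0%Z.

Definition shift (x : site) (i : nat) (k : Z) : site :=
  fun j => if Nat.eq_dec j i then (x j + k)%Z else x j.

Fixpoint sumR (n : nat) (g : nat -> R) : R :=
  match n with O => 0 | S m => sumR m g + g m end.

Definition laplacian (d : nat) (f : site -> R) (x : site) : R :=
  / (2 * INR d) * sumR d (fun i => f (shift x i 1%Z) + f (shift x i (-1)%Z)) - f x.

Definition is_discontinuity (tau : R) (T : R -> site) (s : R) : Prop :=
  0 <= s <= tau /\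
  forall delta, delta > 0 ->
    exists s', 0 <= s' <= tau /\ Rabs (s' - s) < delta /\ T s' <> T s.

Definition toppling_function (d : nat) (tau : R) (T : R -> site) : Prop :=
  0 < tau /\
  (forall s, 0 <= s <= tau -> in_Zd d (T s)) /\
  (forall t, 0 <= t < tau ->
     exists l : list R, forall s, 0 <= s <= t -> is_discontinuity tau T s -> In s l).

Definition indic (T : R -> site) (x : site) (s : R) : R :=
  if excluded_middle_informative (T s = x) then 1 else 0.

(* Riemann integral of f over [a,b] (0 if f is not Riemann integrable). *)
Definition RInt_default (f : R -> R) (a b : R) : R :=
  match excluded_middle_informative (exists _ : Riemann_integrable f a b, True) with
  | left H => RiemannInt (proj1_sig (constructive_indefinite_description _ H))
  | right _ => 0
  end.

(* Odometer u_t(x) = L(T^{-1}(x) ∩ [0,t]), as the integral of the indicator. *)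
Definition odometer (T : R -> site) (t : R) (x : site) : R :=
  RInt_default (indic T x) 0 t.

Definition mass (d : nat) (nu0 : site -> R) (T : R -> site) (t : R) (y : site) : R :=
  nu0 y + laplacian d (odometer T t) y.

Definition legal (d : nat) (nu0 : site -> R) (tau : R) (T : R -> site) : Prop :=
  forall t, 0 <= t <= tau -> mass d nu0 T t (T t) >= 1.

Definition complete (d : nat) (nu0 : site -> R) (tau : R) (T : R -> site) : Prop :=
  legal d nu0 tau T /\ forall y, in_Zd d y -> mass d nu0 T tau y <= 1.

(* Main.v *)
Require Import Defs.
From Stdlib Require Import Reals ZArith List Lra Classical ClassicalEpsilon.
From Stdlib Require Import Lia RList Ranalysis1 RiemannInt_SF RiemannInt.
Open Scope R_scope.

Lemma RInt_eq f a b (pr : Riemann_integrable f a b) : RInt_default f a b = RiemannInt pr.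
Proof.
  unfold RInt_default. destruct excluded_middle_informative as [H|H].
  - apply RiemannInt_P5.
  - exfalso; apply H; exists pr; exact I.
Qed.

Definition SF_cte (a b c : R) (h : a <= b) : StepFun a b :=
  mkStepFun (existT _ (a :: b :: nil) (existT _ (c :: nil) (StepFun_P3 c h))).

Lemma SF_cte_int a b c h : RiemannInt_SF (SF_cte a b c h) = c * (b - a).
Proof.
  unfold RiemannInt_SF. destruct (Rle_dec a b); [|lra]. simpl. ring.
Qed.

Lemma stepfun_integrable f a b : a <= b -> IsStepFun f a b -> Riemann_integrable f a b.
Proof.
  intros hab H eps. exists (mkStepFun H). exists (SF_cte a b 0 hab).
  split.
  - intros t _. simpl. unfold fct_cte. rewrite Rminus_diag, Rabs_R0. lra.
  - rewrite SF_cte_int. rewrite Rmult_0_l, Rabs_R0. apply cond_pos.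
Qed.

Lemma no_disc_nbhd tau (T : R -> site) m : 0 <= m <= tau -> ~ is_discontinuity tau T m ->
  exists del, del > 0 /\ forall q, 0 <= q <= tau -> Rabs (q - m) < del -> T q = T m.
Proof.
  intros hm hd. apply NNPP; intro hc. apply hd. split; [exact hm|].
  intros del hdel. apply NNPP; intro h2. apply hc. exists del. split; [exact hdel|].
  intros q hq hqm. apply NNPP; intro h3. apply h2. exists q. auto.
Qed.

Lemma piece_const_aux tau (T : R -> site) a b :
  0 <= a -> b <= tau ->
  (forall r, a < r < b -> ~ is_discontinuity tau T r) ->
  forall s s', a < s -> s <= s' -> s' < b -> T s' = T s.
Proof.
  intros ha hb hnd s s' h1 h2 h3.
  set (E := fun r => s <= r <= s' /\ forall q, s <= q <= r -> T q = T s).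
  assert (hbd : bound E) by (exists s'; intros r [hr _]; lra).
  assert (hne : exists r, E r).
  { exists s. split; [lra|]. intros q hq. replace q with s by lra. reflexivity. }
  destruct (completeness E hbd hne) as [m [hub hlub]].
  assert (hsm : s <= m) by (apply hub; destruct hne as [r hr]; split; [lra|];
    intros q hq; replace q with s by lra; reflexivity).
  assert (hms' : m <= s') by (apply hlub; intros r [hr _]; lra).
  destruct (no_disc_nbhd tau T m) as [del [hdel hnb]]; [lra| apply hnd; lra |].
  assert (hr : exists r, E r /\ m - del < r).
  { apply NNPP; intro hc. assert (m <= m - del); [|lra].
    apply hlub. intros r hr. apply Rnot_lt_le. intro hlt. apply hc. exists r; auto. }
  destruct hr as [r [[hr1 hr2] hr3]].
  assert (hrm : r <= m) by (apply hub; split; auto).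
  assert (hTm : T m = T s).
  { rewrite <- (hr2 r) by lra. symmetry. apply hnb; [lra|]. apply Rabs_def1; lra. }
  set (r2 := Rmin (m + del/2) s').
  assert (hE2 : E r2).
  { unfold r2. split. split; [apply Rmin_glb; lra| apply Rmin_r].
    intros q hq. destruct (Rle_dec q r) as [hqr|hqr]. apply hr2; lra.
    rewrite <- hTm. apply hnb. split; [lra|]. pose proof (Rmin_r (m+del/2) s'); lra.
    apply Rabs_def1. pose proof (Rmin_l (m+del/2) s'); lra. lra. }
  destruct (Rle_dec (m + del/2) s') as [hc|hc].
  - assert (r2 = m + del/2) by (unfold r2; apply Rmin_left; exact hc).
    pose proof (hub r2 hE2). lra.
  - assert (r2 = s') by (unfold r2; apply Rmin_right; lra).
    destruct hE2 as [_ hE]. apply hE. lra.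
Qed.

Lemma piece_const tau (T : R -> site) a b :
  0 <= a -> b <= tau ->
  (forall r, a < r < b -> ~ is_discontinuity tau T r) ->
  forall s s', a < s < b -> a < s' < b -> T s = T s'.
Proof.
  intros ha hb hnd s s' [h1 h2] [h3 h4].
  destruct (Rle_dec s s').
  - symmetry. apply (piece_const_aux tau T a b); auto; lra.
  - apply (piece_const_aux tau T a b); auto; lra.
Qed.

Lemma interval_ind tau (T : R -> site) t0 (P : R -> R -> Type) :
  t0 <= tau ->
  (forall a b, 0 <= a <= b -> b <= t0 ->
     (forall s s', a < s < b -> a < s' < b -> T s = T s') -> P a b) ->
  (forall a s b, 0 <= a <= s -> s <= b -> b <= t0 -> P a s -> P s b -> P a b) ->
  forall l a b, 0 <= a <= b -> b <= t0 ->
    (forall r, a < r < b -> is_discontinuity tau T r -> In r l) -> P a b.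
Proof.
  intros ht0 hbase hstep l. induction l as [|s l IH]; intros a b hab hb hl.
  - apply hbase; auto. apply (piece_const tau T a b); [lra|lra|].
    intros r hr hd. exact (hl r hr hd).
  - destruct (Rlt_dec a s) as [h1|h1]; [destruct (Rlt_dec s b) as [h2|h2]|].
    + apply (hstep a s b); try lra.
      * apply IH; try lra. intros r hr hd. destruct (hl r ltac:(lra) hd); [lra|auto].
      * apply IH; try lra. intros r hr hd. destruct (hl r ltac:(lra) hd); [lra|auto].
    + apply IH; auto. intros r hr hd. destruct (hl r hr hd); [lra|auto].
    + apply IH; auto. intros r hr hd. destruct (hl r hr hd); [lra|auto].
Qed.

Lemma adapted_two f a b c : a <= b -> (forall x, a < x < b -> f x = c) ->
  adapted_couple f a b (a :: b :: nil) (c :: nil).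
Proof.
  intros H Hf; unfold adapted_couple; repeat split.
  - unfold ordered_Rlist; intros i hi; simpl in hi.
    destruct i; [simpl; lra| lia].
  - simpl; unfold Rmin; destruct (Rle_dec a b); lra.
  - simpl; unfold Rmax; destruct (Rle_dec a b); lra.
  - unfold constant_D_eq, open_interval; intros i hi x hx; simpl in hi.
    destruct i; [simpl in *; apply Hf; lra | lia].
Qed.

Lemma adapted_three f a m b c1 c2 : a <= m -> m <= b ->
  (forall x, a < x < m -> f x = c1) -> (forall x, m < x < b -> f x = c2) ->
  adapted_couple f a b (a :: m :: b :: nil) (c1 :: c2 :: nil).
Proof.
  intros H1 H2 Hf1 Hf2; unfold adapted_couple; repeat split.
  - unfold ordered_Rlist; intros i hi; simpl in hi.
    destruct i as [|[|i]]; [simpl; lra|simpl; lra| lia].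
  - simpl; unfold Rmin; destruct (Rle_dec a b); lra.
  - simpl; unfold Rmax; destruct (Rle_dec a b); lra.
  - unfold constant_D_eq, open_interval; intros i hi x hx; simpl in hi.
    destruct i as [|[|i]]; [simpl in *; apply Hf1; lra | simpl in *; apply Hf2; lra | lia].
Qed.

Lemma stepfun_pieces tau (T : R -> site) t0 (h : R -> R) l : t0 <= tau ->
  (forall a b, 0 <= a <= b -> b <= t0 ->
     (forall s s', a < s < b -> a < s' < b -> T s = T s') ->
     forall x, a < x < b -> h x = h ((a+b)/2)) ->
  (forall r, 0 <= r <= t0 -> is_discontinuity tau T r -> In r l) ->
  forall a b, 0 <= a <= b -> b <= t0 -> IsStepFun h a b.
Proof.
  intros ht0 hh hl a b hab hb.
  apply (interval_ind tau T t0 (fun a b => IsStepFun h a b) ht0) with (l := l); auto.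
  - intros a' b' hab' hb' hc. exists (a' :: b' :: nil). exists (h ((a'+b')/2) :: nil).
    apply adapted_two; [lra|]. apply hh; auto.
  - intros a' s b' h1 h2 h3 H1 H2. exact (StepFun_P46 H1 H2).
  - intros r hr hd. apply hl; auto; lra.
Qed.

Lemma indic_const (T : R -> site) x a b :
  (forall s s', a < s < b -> a < s' < b -> T s = T s') ->
  forall y, a < y < b -> indic T x y = indic T x ((a+b)/2).
Proof.
  intros hc y hy. unfold indic. rewrite (hc y ((a+b)/2)) by lra. reflexivity.
Qed.

Lemma indic_bound (T : R -> site) x s : 0 <= indic T x s <= 1.
Proof. unfold indic; destruct excluded_middle_informative; lra. Qed.

Lemma integ_lt d tau (T : R -> site) x t : toppling_function d tau T -> 0 <= t < tau ->
  exists _ : Riemann_integrable (indic T x) 0 t, True.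
Proof.
  intros [_ [_ hf]] ht. destruct (hf t ht) as [l hl].
  assert (hs : IsStepFun (indic T x) 0 t).
  { apply (stepfun_pieces tau T t (indic T x) l); try lra.
    - intros a b _ _ hc. apply indic_const; auto.
    - intros r hr hd. apply hl; auto. }
  exists (stepfun_integrable (indic T x) 0 t (proj1 ht) hs). exact I.
Qed.

Lemma integ_tau d tau (T : R -> site) x : toppling_function d tau T ->
  Riemann_integrable (indic T x) 0 tau.
Proof.
  intros [htau [_ hf]] eps.
  set (t := Rmax 0 (tau - eps/2)).
  assert (ht : 0 <= t < tau).
  { unfold t. split. apply Rmax_l. apply Rmax_lub_lt; [lra|]. pose proof (cond_pos eps); lra. }
  assert (ht2 : tau - t <= eps/2) by (unfold t; pose proof (Rmax_r 0 (tau - eps/2)); lra).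
  destruct (constructive_indefinite_description _ (hf t ht)) as [l hl].
  set (g := fun s => if Rle_dec s t then indic T x s else 0).
  assert (hs1 : IsStepFun g 0 t).
  { apply (stepfun_pieces tau T t g l); try lra.
    - intros a b hab hb hc y hy. unfold g.
      destruct (Rle_dec y t); [|lra]. destruct (Rle_dec ((a+b)/2) t); [|lra].
      apply indic_const; auto.
    - intros r hr hd. apply hl; auto. }
  assert (hs2 : IsStepFun g t tau).
  { exists (t :: tau :: nil). exists (0 :: nil). apply adapted_two; [lra|].
    intros y hy. unfold g. destruct (Rle_dec y t); [lra|reflexivity]. }
  set (psi := fun s => if Rle_dec s t then 0 else 1).
  assert (hpa : adapted_couple psi 0 tau (0 :: t :: tau :: nil) (0 :: 1 :: nil)).
  { apply adapted_three; try lra.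
    - intros y hy. unfold psi. destruct (Rle_dec y t); [reflexivity|lra].
    - intros y hy. unfold psi. destruct (Rle_dec y t); [lra|reflexivity]. }
  pose (hp := existT (fun l => is_subdivision psi 0 tau l) (0 :: t :: tau :: nil)
                (existT _ (0 :: 1 :: nil) hpa) : IsStepFun psi 0 tau).
  exists (mkStepFun (StepFun_P46 hs1 hs2)). exists (mkStepFun hp). split.
  - intros s _. simpl. unfold g, psi. destruct (Rle_dec s t).
    + rewrite Rminus_diag, Rabs_R0; lra.
    + rewrite Rminus_0_r. pose proof (indic_bound T x s). rewrite Rabs_right; lra.
  - unfold RiemannInt_SF. destruct (Rle_dec 0 tau); [|lra]. simpl.
    rewrite Rabs_right; lra.
Qed.

Lemma integ d tau (T : R -> site) x t : toppling_function d tau T -> 0 <= t <= tau ->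
  exists _ : Riemann_integrable (indic T x) 0 t, True.
Proof.
  intros hT ht. destruct (Rlt_le_dec t tau).
  - apply (integ_lt d tau T x t hT); lra.
  - replace t with tau by lra. exists (integ_tau d tau T x hT). exact I.
Qed.

Lemma odo_chasles d tau (T : R -> site) x r s : toppling_function d tau T ->
  0 <= r -> r <= s -> s <= tau ->
  exists pr : Riemann_integrable (indic T x) r s,
    odometer T s x = odometer T r x + RiemannInt pr.
Proof.
  intros hT h1 h2 h3.
  destruct (integ d tau T x r hT ltac:(lra)) as [pr1 _].
  destruct (integ d tau T x s hT ltac:(lra)) as [pr2 _].
  pose (pr3 := RiemannInt_P23 pr2 (conj h1 h2)). exists pr3.
  unfold odometer. rewrite (RInt_eq _ _ _ pr1), (RInt_eq _ _ _ pr2).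
  symmetry. apply RiemannInt_P25; auto.
Qed.

Lemma odo_lip d tau (T : R -> site) x r s : toppling_function d tau T ->
  0 <= r -> r <= s -> s <= tau ->
  odometer T r x <= odometer T s x <= odometer T r x + (s - r).
Proof.
  intros hT h1 h2 h3. destruct (odo_chasles d tau T x r s hT h1 h2 h3) as [pr e].
  rewrite e. pose proof (RiemannInt_const_bound (l:=0) (u:=1) pr h2 (fun y _ => indic_bound T x y)).
  lra.
Qed.

Lemma odo_zero (T : R -> site) x : odometer T 0 x = 0.
Proof. unfold odometer. rewrite (RInt_eq _ _ _ (RiemannInt_P7 (indic T x) 0)). apply RiemannInt_P9. Qed.

Lemma odo_piece d tau (T : R -> site) x m s : toppling_function d tau T ->
  0 <= m -> m <= s -> s <= tau -> (forall q, m < q < s -> T q = x) ->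
  odometer T s x = odometer T m x + (s - m) /\
  forall y, y <> x -> odometer T s y = odometer T m y.
Proof.
  intros hT h1 h2 h3 hq. split.
  - destruct (odo_chasles d tau T x m s hT h1 h2 h3) as [pr e]. rewrite e.
    rewrite (RiemannInt_P18 pr (RiemannInt_P14 m s 1) h2).
    rewrite RiemannInt_P15. ring.
    intros y hy. unfold indic, fct_cte. rewrite hq by lra.
    destruct excluded_middle_informative; [reflexivity|congruence].
  - intros y hy. destruct (odo_chasles d tau T y m s hT h1 h2 h3) as [pr e]. rewrite e.
    rewrite (RiemannInt_P18 pr (RiemannInt_P14 m s 0) h2).
    rewrite RiemannInt_P15. ring.
    intros z hz. unfold indic, fct_cte. rewrite hq by lra.
    destruct excluded_middle_informative; [congruence|reflexivity].
Qed.

Definition sumL (L : list site) (g : site -> R) : R :=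
  fold_right (fun x acc => g x + acc) 0 L.

Lemma sumL_integ d tau (T : R -> site) t : toppling_function d tau T -> 0 <= t <= tau ->
  forall L, exists pr : Riemann_integrable (fun s => sumL L (fun x => indic T x s)) 0 t,
    RiemannInt pr = sumL L (fun x => odometer T t x).
Proof.
  intros hT ht L. induction L as [|x L [prL eL]].
  - exists (RiemannInt_P14 0 t 0). transitivity (0 * (t - 0)); [exact (RiemannInt_P15 (RiemannInt_P14 0 t 0)) | simpl; ring].
  - destruct (integ d tau T x t hT ht) as [prx _].
    pose (p10 := RiemannInt_P10 1 prx prL).
    assert (pe : Riemann_integrable (fun s => sumL (x :: L) (fun x => indic T x s)) 0 t).
    { apply (Riemann_integrable_ext (f := fun s => indic T x s + 1 * sumL L (fun x => indic T x s))).
      intros; simpl; ring. exact p10. }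
    exists pe. rewrite (RiemannInt_P18 pe p10); [| lra | intros; simpl; ring].
    rewrite (RiemannInt_P13 prx prL p10). rewrite eL. simpl.
    replace (odometer T t x) with (RiemannInt prx) by (unfold odometer; symmetry; apply RInt_eq). ring.
Qed.

Lemma sumL_le (L : list site) f g : (forall x, In x L -> f x <= g x) -> sumL L f <= sumL L g.
Proof.
  induction L as [|x L IH]; intros h; simpl. lra.
  pose proof (h x (or_introl eq_refl)). assert (sumL L f <= sumL L g) by (apply IH; intros; apply h; right; auto). lra.
Qed.

Lemma sum_indic (T : R -> site) s L : NoDup L ->
  (In (T s) L -> sumL L (fun x => indic T x s) = 1) /\
  (~ In (T s) L -> sumL L (fun x => indic T x s) = 0).
Proof.
  induction L as [|x L IH]; intros hnd.
  - simpl. split; [tauto| auto].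
  - inversion hnd as [|? ? hx hnd']; subst. destruct (IH hnd') as [I1 I2]. simpl.
    destruct (excluded_middle_informative (T s = x)) as [e|e];
    [assert (hi: indic T x s = 1) by (unfold indic; destruct excluded_middle_informative; first [reflexivity|tauto])
    |assert (hi: indic T x s = 0) by (unfold indic; destruct excluded_middle_informative; first [reflexivity|tauto])];
    rewrite hi.
    + assert (hn : ~ In (T s) L) by (rewrite e; auto). split.
      * intros _. rewrite (I2 hn). lra.
      * intros h. exfalso. apply h. left. auto.
    + split.
      * intros [h|h]; [congruence|]. rewrite I1; auto; lra.
      * intros h. rewrite I2; [lra|]. intro; apply h; right; auto.
Qed.

Fixpoint dedup (l : list site) : list site :=
  match l with
  | nil => nil
  | x :: l' => if excluded_middle_informative (In x l') then dedup l' else x :: dedup l'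
  end.

Lemma dedup_In l y : In y (dedup l) <-> In y l.
Proof.
  induction l as [|x l IH]; simpl. tauto.
  destruct excluded_middle_informative as [h|h]; simpl; rewrite IH; split; try tauto.
  intros [e|e]; [subst; auto|auto].
Qed.

Lemma dedup_NoDup l : NoDup (dedup l).
Proof.
  induction l as [|x l IH]; simpl. constructor.
  destruct excluded_middle_informative as [h|h]; auto. constructor; auto.
  rewrite dedup_In; auto.
Qed.

Lemma cover d tau (T : R -> site) t : toppling_function d tau T -> 0 <= t < tau ->
  exists L, (forall s, 0 <= s <= t -> In (T s) L) /\ (forall y, In y L -> in_Zd d y).
Proof.
  intros hT ht. pose proof hT as [_ [hz hf]]. destruct (hf t ht) as [l hl].
  refine (interval_ind tau T t
    (fun a b => exists L, (forall s, a <= s <= b -> In (T s) L) /\ (forall y, In y L -> in_Zd d y))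
    ltac:(lra) _ _ l 0 t ltac:(lra) ltac:(lra) _).
  - intros a b hab hb hc. exists (T a :: T ((a+b)/2) :: T b :: nil). split.
    + intros s hs. destruct (Req_dec s a) as [e|e]; [subst; left; auto|].
      destruct (Req_dec s b) as [e'|e']; [subst; right; right; left; auto|].
      right; left. apply hc; lra.
    + intros y [e|[e|[e|[]]]]; subst; apply hz; lra.
  - intros a s b h1 h2 h3 [L1 [H1 Z1]] [L2 [H2 Z2]]. exists (L1 ++ L2). split.
    + intros q hq. apply in_or_app. destruct (Rle_dec q s); [left; apply H1|right; apply H2]; lra.
    + intros y hy. apply in_app_or in hy. destruct hy; auto.
  - intros r hr hd. apply hl; auto; lra.
Qed.

Lemma shift_neq x i k : k <> 0%Z -> Defs.shift x i k <> x.
Proof.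
  intros hk e. assert (h := f_equal (fun f => f i) e). simpl in h. unfold Defs.shift in h.
  destruct (Nat.eq_dec i i) as [_|n]; [lia| congruence].
Qed.

Lemma shift_Zd d x i k : in_Zd d x -> (i < d)%nat -> in_Zd d (Defs.shift x i k).
Proof.
  intros hx hi j hj. unfold Defs.shift. destruct (Nat.eq_dec j i); [lia|]. apply hx; auto.
Qed.

Lemma sumR_le n f g : (forall i, (i < n)%nat -> f i <= g i) -> sumR n f <= sumR n g.
Proof.
  induction n as [|n IH]; intros h; simpl. lra.
  pose proof (h n ltac:(lia)). assert (sumR n f <= sumR n g) by (apply IH; intros; apply h; lia). lra.
Qed.

Lemma sumR_ext n f g : (forall i, (i < n)%nat -> f i = g i) -> sumR n f = sumR n g.
Proof.
  induction n as [|n IH]; intros h; simpl. lra.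
  rewrite (h n ltac:(lia)), IH; [reflexivity|]. intros; apply h; lia.
Qed.

Lemma gap (l : list R) m c : m < c -> exists b, m < b <= c /\ forall r, In r l -> ~ (m < r < b).
Proof.
  induction l as [|r l IH]; intros hmc.
  - exists c. split; [lra|]. intros r [].
  - destruct (IH hmc) as [b [hb hr]]. destruct (Rle_dec r m) as [h|h].
    + exists b. split; auto. intros q [e|e]; [subst; lra| auto].
    + exists (Rmin b r). split. split; [apply Rmin_glb_lt; lra| pose proof (Rmin_l b r); lra].
      intros q [e|e] hq. subst. pose proof (Rmin_r b q); lra.
      apply (hr q e). pose proof (Rmin_l b r); lra.
Qed.

Lemma least_action d (hd : (1 <= d)%nat) nu0 tau1 tau2 (T1 T2 : R -> site)
  (hT1 : toppling_function d tau1 T1) (hT2 : toppling_function d tau2 T2)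
  (hl1 : legal d nu0 tau1 T1) (hc2 : complete d nu0 tau2 T2) :
  forall t, 0 <= t <= tau1 -> forall x, in_Zd d x -> odometer T1 t x <= odometer T2 tau2 x.
Proof.
  set (U2 := fun x => odometer T2 tau2 x).
  assert (hU2 : forall x, 0 <= U2 x).
  { intros x. unfold U2. rewrite <- (odo_zero T2 x). apply (odo_lip d tau2 T2 x 0 tau2 hT2); try lra.
    destruct hT2; lra. }
  set (E := fun t => 0 <= t <= tau1 /\ forall x, in_Zd d x -> odometer T1 t x <= U2 x).
  assert (htau1 : 0 < tau1) by (destruct hT1; lra).
  assert (hE0 : E 0) by (split; [lra|]; intros x _; rewrite odo_zero; apply hU2).
  assert (hbd : bound E) by (exists tau1; intros r [hr _]; lra).
  destruct (completeness E hbd (ex_intro _ 0 hE0)) as [m [hub hlub]].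
  assert (hm0 : 0 <= m) by (apply hub; exact hE0).
  assert (hm1 : m <= tau1) by (apply hlub; intros r [hr _]; lra).
  assert (hEm : E m).
  { split; [lra|]. intros x hx. apply Rnot_lt_le. intro hlt.
    set (eps := (odometer T1 m x - U2 x) / 2).
    assert (hr : exists r, E r /\ m - eps < r).
    { apply NNPP; intro hc. assert (m <= m - eps); [|unfold eps in *; lra].
      apply hlub. intros r hr. apply Rnot_lt_le. intro h. apply hc. exists r; auto. }
    destruct hr as [r [[hr1 hr2] hr3]]. pose proof (hub r (conj hr1 hr2)).
    pose proof (odo_lip d tau1 T1 x r m hT1 ltac:(lra) ltac:(lra) ltac:(lra)).
    pose proof (hr2 x hx). unfold eps in *. lra. }
  assert (hmt : m = tau1).
  { apply NNPP; intro hne. assert (hlt : m < tau1) by lra.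
    set (c := (m + tau1) / 2).
    destruct hT1 as [_ [hz1 hf1]].
    destruct (hf1 c ltac:(unfold c; lra)) as [l hl].
    destruct (gap l m c ltac:(unfold c; lra)) as [b [hb hlb]].
    assert (hconst : forall s s', m < s < b -> m < s' < b -> T1 s = T1 s').
    { apply (piece_const tau1 T1 m b); try lra. unfold c in hb; lra.
      intros r hr hd'. apply (hlb r); auto. apply hl; auto. split; lra. }
    set (x := T1 ((m + b) / 2)).
    assert (hq : forall q, m < q < b -> T1 q = x) by (intros q hq; apply hconst; lra).
    assert (hx : in_Zd d x) by (apply hz1; unfold c in hb; lra).
    assert (hcb : b < tau1) by (unfold c in hb; lra).
    destruct (Rlt_le_dec (odometer T1 m x) (U2 x)) as [hc|hc].
    - set (s := m + Rmin ((b - m) / 2) ((U2 x - odometer T1 m x) / 2)).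
      assert (hs1 : m < s).
      { unfold s. assert (0 < Rmin ((b - m) / 2) ((U2 x - odometer T1 m x) / 2)); [|lra].
        apply Rmin_glb_lt; lra. }
      assert (hs2 : s <= b) by (unfold s; pose proof (Rmin_l ((b - m) / 2) ((U2 x - odometer T1 m x) / 2)); lra).
      assert (hs3 : s - m <= (U2 x - odometer T1 m x) / 2)
        by (unfold s; pose proof (Rmin_r ((b - m) / 2) ((U2 x - odometer T1 m x) / 2)); lra).
      destruct (odo_piece d tau1 T1 x m s (conj htau1 (conj hz1 hf1)) hm0 ltac:(lra) ltac:(lra)
                  ltac:(intros q hq'; apply hq; lra)) as [e1 e2].
      assert (E s).
      { split; [lra|]. intros y hy. destruct (classic (y = x)) as [->|ne].
        - rewrite e1. lra.
        - rewrite (e2 y ne). apply (proj2 hEm y hy). }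
      pose proof (hub s H). lra.
    - set (s := (m + b) / 2).
      destruct (odo_piece d tau1 T1 x m s (conj htau1 (conj hz1 hf1)) hm0 ltac:(unfold s; lra)
                  ltac:(unfold s; lra) ltac:(intros q hq'; apply hq; unfold s in hq'; lra)) as [e1 e2].
      pose proof (hl1 s ltac:(unfold s; lra)) as hleg.
      assert (hTs : T1 s = x) by (unfold x, s; reflexivity).
      rewrite hTs in hleg.
      pose proof (proj2 hc2 x hx) as hm2.
      unfold mass, laplacian in hleg, hm2.
      assert (hsum : sumR d (fun i => odometer T1 s (Defs.shift x i 1) + odometer T1 s (Defs.shift x i (-1)))
                     <= sumR d (fun i => odometer T2 tau2 (Defs.shift x i 1) + odometer T2 tau2 (Defs.shift x i (-1)))).
      { apply sumR_le. intros i hi.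
        rewrite (e2 _ (shift_neq x i 1 ltac:(lia))), (e2 _ (shift_neq x i (-1) ltac:(lia))).
        pose proof (proj2 hEm _ (shift_Zd d x i 1 hx hi)).
        pose proof (proj2 hEm _ (shift_Zd d x i (-1) hx hi)). unfold U2 in *. lra. }
      assert (hpos : 0 < / (2 * INR d)).
      { apply Rinv_0_lt_compat. assert (0 < INR d) by (apply lt_0_INR; lia). lra. }
      pose proof (Rmult_le_compat_l _ _ _ (Rlt_le _ _ hpos) hsum).
      unfold U2 in hc. unfold s in *. lra. }
  subst m. intros t ht x hx. destruct hEm as [_ hE].
  pose proof (odo_lip d tau1 T1 x t tau1 hT1 ltac:(lra) ltac:(lra) ltac:(lra)).
  pose proof (hE x hx). unfold U2 in *. lra.
Qed.

Lemma tau_le d tau1 tau2 (T1 T2 : R -> site)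
  (hT1 : toppling_function d tau1 T1) (hT2 : toppling_function d tau2 T2) :
  (forall x, in_Zd d x -> odometer T2 tau2 x <= odometer T1 tau1 x) -> tau2 <= tau1.
Proof.
  intros hle. apply Rnot_lt_le. intro hlt.
  assert (h1 : 0 < tau1) by (destruct hT1; lra).
  set (t := (tau1 + tau2) / 2).
  destruct (cover d tau2 T2 t hT2 ltac:(unfold t; lra)) as [L [hc hz]].
  set (L' := dedup L).
  destruct (sumL_integ d tau2 T2 t hT2 ltac:(unfold t; lra) L') as [pr2 e2].
  pose proof (RiemannInt_const_bound (l:=1) (u:=1) pr2 ltac:(unfold t; lra)) as b2.
  destruct (sumL_integ d tau1 T1 tau1 hT1 ltac:(lra) L') as [pr1 e1].
  pose proof (RiemannInt_const_bound (l:=0) (u:=1) pr1 ltac:(lra)) as b1.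
  assert (hb2 : forall s, 0 < s < t -> 1 <= sumL L' (fun x => indic T2 x s) <= 1).
  { intros s hs. rewrite (proj1 (sum_indic T2 s L' (dedup_NoDup L))). lra.
    unfold L'. rewrite dedup_In. apply hc; lra. }
  assert (hb1 : forall s, 0 < s < tau1 -> 0 <= sumL L' (fun x => indic T1 x s) <= 1).
  { intros s hs. destruct (classic (In (T1 s) L')) as [h|h].
    rewrite (proj1 (sum_indic T1 s L' (dedup_NoDup L)) h). lra.
    rewrite (proj2 (sum_indic T1 s L' (dedup_NoDup L)) h). lra. }
  specialize (b2 hb2). specialize (b1 hb1).
  assert (sumL L' (fun x => odometer T2 t x) <= sumL L' (fun x => odometer T1 tau1 x)).
  { apply sumL_le. intros x hx.
    pose proof (odo_lip d tau2 T2 x t tau2 hT2 ltac:(unfold t; lra) ltac:(unfold t; lra) ltac:(lra)).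
    assert (hzx : in_Zd d x) by (apply hz; unfold L' in hx; rewrite dedup_In in hx; auto).
    pose proof (hle x hzx). lra. }
  unfold t in *. lra.
Qed.

Theorem mainTheorem13 (d : nat) (hd : (1 <= d)%nat) (nu0 : site -> R)
  (tau1 tau2 : R) (T1 T2 : R -> site)
  (hT1 : toppling_function d tau1 T1) (hT2 : toppling_function d tau2 T2)
  (hc1 : complete d nu0 tau1 T1) (hc2 : complete d nu0 tau2 T2) :
  (forall x, in_Zd d x -> odometer T1 tau1 x = odometer T2 tau2 x) /\
  tau1 = tau2 /\
  (forall y, in_Zd d y -> mass d nu0 T1 tau1 y = mass d nu0 T2 tau2 y).
Proof.
  assert (h1 : 0 < tau1) by (destruct hT1; lra).
  assert (h2 : 0 < tau2) by (destruct hT2; lra).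
  pose proof (least_action d hd nu0 tau1 tau2 T1 T2 hT1 hT2 (proj1 hc1) hc2 tau1 ltac:(lra)) as A.
  pose proof (least_action d hd nu0 tau2 tau1 T2 T1 hT2 hT1 (proj1 hc2) hc1 tau2 ltac:(lra)) as B.
  assert (heq : forall x, in_Zd d x -> odometer T1 tau1 x = odometer T2 tau2 x).
  { intros x hx. apply Rle_antisym; auto. }
  split; [exact heq|]. split.
  - apply Rle_antisym.
    + apply (tau_le d tau2 tau1 T2 T1 hT2 hT1). intros x hx. rewrite heq; auto; lra.
    + apply (tau_le d tau1 tau2 T1 T2 hT1 hT2). intros x hx. rewrite heq; auto; lra.
  - intros y hy. unfold mass, laplacian. rewrite (heq y hy).
    rewrite (sumR_ext d _ (fun i => odometer T2 tau2 (Defs.shift y i 1) + odometer T2 tau2 (Defs.shift y i (-1)))).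
    reflexivity.
    intros i hi. rewrite !heq; auto; apply shift_Zd; auto.
Qed.
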